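(* Let $H$ be a Hermitian operator on $n$ qubits, $\beta>0$, $\rho_\beta=e^{-\beta H}/\operatorname{tr}(e^{-\beta H})$, and let $O$ be a Hermitian observable with $[H,O]=0$. Then for any parameters $\kappa\ge\|O\|$ ($\kappa>0$), positive integer $m$ and $\gamma>0$, the GQPE measurement channel $\mathcal M$ and the associated map $\widehat{\mathcal M}$ both satisfy $s$-detailed balance with respect to $\rho_\beta$ for every $0\le s\le1$.
   Context: GQPE channel: given $O$, $\kappa$, $m$, $\gamma$, set $N=2^{2m}$, $h=2^{-m}$, $\omega_j=(j-N/2)h$ for $j=0,\dots,N-1$, $\xi_\ell=(\ell-N/2)h$, $\widehat g_\gamma(\xi)=(2\sqrt{2\pi}\gamma)^{1/2}e^{-4\pi^2\gamma^2\xi^2}$, $C=\big(h\sum_{\ell=1}^{N-1}\widehat g_\gamma(\xi_\ell)^2\big)^{1/2}$, $\tilde O=O/\kappa$, and Kraus operators $O_j=\frac{h^{3/2}}{C}\sum_{\ell=1}^{N-1}e^{2\pi i\xi_\ell(\omega_jI-\tilde O)}\widehat g_\gamma(\xi_\ell)$, $j=0,\dots,N-1$, so $\mathcal M(\rho)=\sum_jO_j\rho O_j^\dagger$ (a quantum channel). The outcome attached to index $j$ is $w_j=\kappa Z_j$, where $Z_j=\omega_j$ if $|\omega_j|\le2$ and $Z_j=0$ otherwise. With $\mathbb E_{\rho_\beta}(\mathcal M)=\sum_jw_j\operatorname{tr}(O_j\rho_\beta O_j^\dagger)$, define $\widehat{\mathcal M}(X)=\sum_j(w_j-\mathbb E_{\rho_\beta}(\mathcal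 M))O_jXO_j^\dagger$. For $s\in[0,1]$, $\langle A,B\rangle_s=\operatorname{tr}(A^\dagger\rho_\beta^{1-s}B\rho_\beta^s)$; a linear map $\mathcal T$ satisfies $s$-detailed balance w.r.t. $\rho_\beta$ if $\langle A,\mathcal T^\dagger(B)\rangle_s=\langle\mathcal T^\dagger(A),B\rangle_s$ for all $A,B$, where $\mathcal T^\dagger$ is the Hilbert–Schmidt adjoint. *)

(* Defs.v *)
From HB Require Import structures.
From mathcomp Require Import all_boot all_order all_algebra.
From mathcomp Require Import complex.
From mathcomp Require Import all_classical all_reals.
From mathcomp Require Import all_analysis.
Set Implicit Arguments. Unset Strict Implicit. Unset Printing Implicit Defensive.
Import Order.TTheory GRing.Theory Num.Theory.
Local Open Scope ring_scope.
Local Open Scope complex_scope.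

Section GQPE.
Variable R : realType.
Local Notation C := (R[i]).

Definition adj {p q} (A : 'M[C]_(p, q)) : 'M[C]_(q, p) := (map_mx (@Num.conj_op C) A)^T.

Definition is_hermitian {d} (A : 'M[C]_d) : Prop := adj A = A.

Definition vnorm2 {d} (v : 'cV[C]_d) : R := \sum_(i < d) (complex.Re (v i 0) ^+ 2 + complex.Im (v i 0) ^+ 2).
Definition opnorm_le {d} (A : 'M[C]_d) (k : R) : Prop :=
  forall v : 'cV[C]_d, vnorm2 (A *m v) <= k ^+ 2 * vnorm2 v.

(* Functional calculus f(A) for Hermitian A = U^-1 diag(lambda) U (spectral theorem,
   MathComp's spectralmx/spectral_diag); f is applied to the (real) eigenvalues. *)
Definition mxfun {d} (f : R -> C) (A : 'M[C]_d) : 'M[C]_d :=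
  invmx (spectralmx A) *m diag_mx (map_mx (fun z : C => f (complex.Re z)) (spectral_diag A))
    *m spectralmx A.

Definition expi (t : R) : C := (cos t) +i* (sin t).

Definition gibbs {d} (beta : R) (H : 'M[C]_d) : 'M[C]_d :=
  let E := mxfun (fun x => (expR (- beta * x))%:C) H in (\tr E)^-1 *: E.

Definition mxpowR {d} (A : 'M[C]_d) (s : R) : 'M[C]_d := mxfun (fun x => (x `^ s)%:C) A.

Definition sinner {d} (rho : 'M[C]_d) (s : R) (A B : 'M[C]_d) : C :=
  \tr (adj A *m mxpowR rho (1 - s) *m B *m mxpowR rho s).

Definition hs_adjoint {d} (T Tadj : 'M[C]_d -> 'M[C]_d) : Prop :=
  forall A B, \tr (adj A *m T B) = \tr (adj (Tadj A) *m B).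

Definition s_detailed_balance {d} (rho : 'M[C]_d) (s : R) (T : 'M[C]_d -> 'M[C]_d) : Prop :=
  forall Tadj, hs_adjoint T Tadj ->
    forall A B, sinner rho s A (Tadj B) = sinner rho s (Tadj A) B.

Definition gN (m : nat) : nat := 2 ^ (2 * m).
Definition gh (m : nat) : R := (2 ^+ m)^-1.
Definition gomega (m : nat) (j : nat) : R := (j%:R - (gN m)%:R / 2) * gh m.
Definition gxi (m : nat) (l : nat) : R := (l%:R - (gN m)%:R / 2) * gh m.
Definition ghat (gamma xi : R) : R :=
  (2 * Num.sqrt (2 * pi) * gamma) `^ (2^-1) * expR (- (4 * pi ^+ 2 * gamma ^+ 2 * xi ^+ 2)).
Definition gC (m : nat) (gamma : R) : R :=
  Num.sqrt (gh m * \sum_(1 <= l < gN m) ghat gamma (gxi m l) ^+ 2).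

Definition kraus {d} (O : 'M[C]_d) (kappa : R) (m : nat) (gamma : R) (j : nat) : 'M[C]_d :=
  ((gh m `^ (3 / 2) / gC m gamma)%:C) *:
    \sum_(1 <= l < gN m)
      ((ghat gamma (gxi m l))%:C *:
        mxfun (fun x => expi (2 * pi * gxi m l * x)) ((gomega m j)%:C%:M - (kappa^-1)%:C *: O)).

Definition gZ (m : nat) (j : nat) : R := if `|gomega m j| <= 2 then gomega m j else 0.
Definition gw (kappa : R) (m : nat) (j : nat) : R := kappa * gZ m j.

Definition gqpe {d} (O : 'M[C]_d) (kappa : R) (m : nat) (gamma : R) (X : 'M[C]_d) : 'M[C]_d :=
  \sum_(j < gN m) (kraus O kappa m gamma j *m X *m adj (kraus O kappa m gamma j)).

Definition gqpe_mean {d} (rho O : 'M[C]_d) (kappa : R) (m : nat) (gamma : R) : C :=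
  \sum_(j < gN m) ((gw kappa m j)%:C * \tr (kraus O kappa m gamma j *m rho *m adj (kraus O kappa m gamma j))).

Definition gqpe_hat {d} (rho O : 'M[C]_d) (kappa : R) (m : nat) (gamma : R) (X : 'M[C]_d) : 'M[C]_d :=
  \sum_(j < gN m) (((gw kappa m j)%:C - gqpe_mean rho O kappa m gamma) *:
     (kraus O kappa m gamma j *m X *m adj (kraus O kappa m gamma j))).

End GQPE.

(* Main.v *)
Require Import Defs.
From HB Require Import structures.
From mathcomp Require Import all_boot all_order all_algebra.
From mathcomp Require Import complex.
From mathcomp Require Import all_classical all_reals.
From mathcomp Require Import all_analysis.
From mathcomp Require Import lra zify.
From Stdlib Require Import Lia.
Import Order.TTheory GRing.Theory Num.Theory.
Local Open Scope ring_scope.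

Section Aux.
Variable R : realType.
Local Notation C := (R[i]).


Lemma adjE d (A : 'M[C]_d) : adj A = (map_mx (@Num.conj C) A^T).
Proof. by rewrite /adj map_trmx. Qed.

Lemma adj_entry p q (A : 'M[C]_(p, q)) i j : adj A i j = (A j i)^*.
Proof. by rewrite /adj !mxE. Qed.

Lemma adjK d (A : 'M[C]_d) : adj (adj A) = A.
Proof. by apply/matrixP => i j; rewrite !adj_entry conjCK. Qed.

Lemma adjM d (A B : 'M[C]_d) : adj (A *m B) = adj B *m adj A.
Proof. by rewrite /adj map_mxM trmx_mul. Qed.

Lemma adjD d (A B : 'M[C]_d) : adj (A + B) = adj A + adj B.
Proof. by apply/matrixP => i j; rewrite !adj_entry !mxE ?adj_entry rmorphD. Qed.

Lemma adjB d (A B : 'M[C]_d) : adj (A - B) = adj A - adj B.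
Proof. by apply/matrixP => i j; rewrite !adj_entry !mxE ?adj_entry rmorphB. Qed.

Lemma adjZ d a (A : 'M[C]_d) : adj (a *: A) = a^* *: adj A.
Proof. by apply/matrixP => i j; rewrite !adj_entry !mxE ?adj_entry rmorphM. Qed.

Lemma adj_sum d I r (P : pred I) (F : I -> 'M[C]_d) :
  adj (\sum_(i <- r | P i) F i) = \sum_(i <- r | P i) adj (F i).
Proof.
apply/matrixP => i j; rewrite adj_entry !summxE rmorph_sum.
by apply: eq_bigr => k _; rewrite adj_entry.
Qed.

Lemma adj_diag d (v : 'rV[C]_d) : adj (diag_mx v) = diag_mx (map_mx (@Num.conj C) v).
Proof. apply/matrixP => i j.
rewrite adj_entry !mxE; have [->|ne] := eqVneq i j; first by rewrite ?eqxx ?mulr1n.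
have nej : (j == i) = false by rewrite eq_sym (negbTE ne).
by rewrite ?(negbTE ne) ?nej /= ?mulr0n rmorph0. Qed.

Lemma adj_scalar d (a : C) : adj (a%:M : 'M[C]_d) = (a^*)%:M.
Proof.
apply/matrixP => i j.
rewrite adj_entry !mxE eq_sym.
by case: (i == j); rewrite ?mulr1n ?mulr0n ?rmorph0.
Qed.

Lemma tr_adj d (A : 'M[C]_d) : \tr (adj A) = (\tr A)^*.
Proof. rewrite /mxtrace rmorph_sum; apply: eq_bigr => i _; exact: adj_entry. Qed.

Lemma trs d I r (P : pred I) (F : I -> 'M[C]_d) :
  \tr (\sum_(i <- r | P i) F i) = \sum_(i <- r | P i) \tr (F i).
Proof. exact: raddf_sum. Qed.

Lemma tr_delta d (Y : 'M[C]_d) a b : \tr (Y *m delta_mx a b) = Y b a.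
Proof.
rewrite /mxtrace (bigD1 b) //= big1 ?addr0 => [|k nkb]; rewrite mxE.
  rewrite (bigD1 a) //= big1 ?addr0 => [|l /negbTE nla];
  by rewrite mxE ?eqxx ?nla ?mulr1 ?mulr0.
by apply: big1 => l _; rewrite mxE (negbTE nkb) andbF mulr0.
Qed.

Lemma hs_unique d (X Y : 'M[C]_d) :
  (forall B, \tr (adj X *m B) = \tr (adj Y *m B)) -> X = Y.
Proof.
move=> h; apply/matrixP => i j; have := h (delta_mx i j).
rewrite !tr_delta !adj_entry => /(congr1 (@Num.conj C)).
by rewrite !conjCK.
Qed.


Definition fmx {d} (P : 'M[C]_d) (v : 'rV[C]_d) := invmx P *m diag_mx v *m P.

Lemma mxfunE d f (A : 'M[C]_d) :
  mxfun f A = fmx (spectralmx A) (map_mx (fun z : C => f (complex.Re z)) (spectral_diag A)).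
Proof. by []. Qed.

Lemma adj_fmx d (P : 'M[C]_d) v : P \is unitarymx ->
  adj (fmx P v) = fmx P (map_mx (@Num.conj C) v).
Proof.
move=> uP; have iP : invmx P = adj P by rewrite invmx_unitary // adjE.
by rewrite /fmx !adjM adj_diag -iP iP adjK mulmxA.
Qed.

Lemma adj_mxfun d f (A : 'M[C]_d) :
  adj (mxfun f A) = mxfun (fun x => (f x)^*) A.
Proof.
rewrite mxfunE adj_fmx; last exact: spectral_unitarymx.
rewrite mxfunE; congr fmx.
by apply/matrixP => i j; rewrite !mxE.
Qed.

Lemma herm_normal d (A : 'M[C]_d) : is_hermitian A -> A \is normalmx.
Proof. by move=> hA; apply/normalmxP; rewrite -adjE hA. Qed.


Lemma conj_comm0 d (P Q X B : 'M[C]_d) : P *m Q = 1%:M -> Q *m P = 1%:M ->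
  (Q *m X *m P) *m B = B *m (Q *m X *m P) ->
  X *m (P *m B *m Q) = (P *m B *m Q) *m X.
Proof.
move=> PQ QP h.
have := congr1 (fun Y => P *m Y *m Q) h => /=.
rewrite !mulmxA PQ mul1mx -(mulmxA _ P Q) PQ mulmx1 => ->.
by rewrite ?mulmxA.
Qed.

Lemma conj_comm d (P X B : 'M[C]_d) : P \in unitmx ->
  (invmx P *m X *m P) *m B = B *m (invmx P *m X *m P) <->
  X *m (P *m B *m invmx P) = (P *m B *m invmx P) *m X.
Proof.
move=> uP; move: (mulmxV uP) (mulVmx uP); move: (invmx P) => Q PQ QP.
split; first exact: conj_comm0.
move=> h; exact: esym (conj_comm0 _ _ _ _ _ QP PQ (esym h)).
Qed.

Lemma fmx_comm d (P : 'M[C]_d) (v : 'rV[C]_d) (g : C -> C) B : P \in unitmx ->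
  fmx P v *m B = B *m fmx P v ->
  fmx P (map_mx g v) *m B = B *m fmx P (map_mx g v).
Proof.
move=> uP; rewrite /fmx => /(conj_comm _ _ _ _ uP) h; apply/(conj_comm _ _ _ _ uP).
move: h; set B' := P *m B *m invmx P; clearbody B'.
rewrite mul_diag_mx mul_mx_diag => h; rewrite mul_diag_mx mul_mx_diag.
apply/matrixP => i j; move/matrixP: h => /(_ i j); rewrite !mxE => e.
have : (v 0 i - v 0 j) * B' i j = 0 by rewrite mulrBl e mulrC subrr.
move/eqP; rewrite mulf_eq0 => /orP []; first by rewrite subr_eq0 => /eqP ->; rewrite mulrC.
by move/eqP ->; rewrite mulr0 mul0r.
Qed.

Lemma mxfun_comm d f (A B : 'M[C]_d) : A \is normalmx -> A *m B = B *m A ->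
  mxfun f A *m B = B *m mxfun f A.
Proof.
move=> nA AB; rewrite mxfunE; apply: fmx_comm; first exact: spectral_unit.
have eA : A = invmx (spectralmx A) *m diag_mx (spectral_diag A) *m spectralmx A.
  exact/orthomx_spectralP.
by rewrite /fmx -eA.
Qed.

Lemma comm_sum d I r (P : pred I) (a : I -> C) (F : I -> 'M[C]_d) (G : 'M[C]_d) :
  (forall i, P i -> F i *m G = G *m F i) ->
  (\sum_(i <- r | P i) a i *: F i) *m G = G *m (\sum_(i <- r | P i) a i *: F i).
Proof.
move=> h; rewrite mulmx_suml mulmx_sumr; apply: eq_bigr => i Pi.
by rewrite -scalemxAl -scalemxAr h.
Qed.

Lemma comm_scale d a (F G : 'M[C]_d) : F *m G = G *m F -> (a *: F) *m G = G *m (a *: F).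
Proof. by move=> h; rewrite -scalemxAl -scalemxAr h. Qed.


Lemma db_generic d (rho : 'M[C]_d) s N (c : 'I_N -> C) (K : 'I_N -> 'M[C]_d) :
  (forall j, (c j)^* = c j) -> (forall j, adj (K j) = K j) ->
  (forall j t, K j *m mxpowR rho t = mxpowR rho t *m K j) ->
  s_detailed_balance rho s (fun X => \sum_(j < N) c j *: (K j *m X *m adj (K j))).
Proof.
move=> hc hK hP.
pose T := fun X => \sum_(j < N) c j *: (K j *m X *m adj (K j)).
have hT : forall A B, \tr (adj A *m T B) = \tr (adj (T A) *m B).
  move=> A B; rewrite /T adj_sum mulmx_sumr mulmx_suml !trs; apply: eq_bigr => j _.
  rewrite adjZ hc -scalemxAr -scalemxAl !mxtraceZ; congr (_ * _).
  rewrite !adjM !hK !mulmxA [LHS]mxtrace_mulC.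
  by rewrite !mulmxA.
move=> Tadj hTadj A B.
have eT : forall A, Tadj A = T A.
  move=> A'; apply: hs_unique => B'; by rewrite -hTadj hT.
rewrite /sinner !eT /T.
have h1 := hP ^~ (1 - s); have h2 := hP ^~ s.
move: h1 h2; move: (mxpowR rho (1 - s)) (mxpowR rho s) => P1 P2 h1 h2.
rewrite adj_sum !mulmx_suml !mulmx_sumr !mulmx_suml !trs.
apply: eq_bigr => j _.
rewrite adjZ hc -!scalemxAr -!scalemxAl !mxtraceZ; congr (_ * _).
rewrite !adjM !hK !mulmxA.
rewrite -(mulmxA _ P1 (K j)) -h1 !mulmxA.
rewrite -(mulmxA _ (K j) P2) h2 !mulmxA.
rewrite [LHS]mxtrace_mulC.
by rewrite !mulmxA.
Qed.


Lemma conj_real (x : R) : ((x%:C)%C)^* = (x%:C)%C :> C.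
Proof. exact: conjc_real. Qed.

Lemma conjM' (a b : C) : (a * b)^* = a^* * b^*.
Proof. exact: rmorphM. Qed.

Lemma conjB' (a b : C) : (a - b)^* = a^* - b^*.
Proof. exact: rmorphB. Qed.

Lemma conj_sum' I r (P : pred I) (F : I -> C) :
  (\sum_(i <- r | P i) F i)^* = \sum_(i <- r | P i) (F i)^*.
Proof. exact: rmorph_sum. Qed.

Lemma expi_conj (t : R) : (expi t)^* = expi (- t).
Proof. rewrite /expi cosN sinN. by []. Qed.

Lemma adj_real_mxfun d (f : R -> R) (A : 'M[C]_d) :
  adj (mxfun (fun x => ((f x)%:C)%C) A) = mxfun (fun x => ((f x)%:C)%C) A.
Proof.
rewrite adj_mxfun; congr mxfun; apply: funext => x; exact: conj_real.
Qed.

Lemma herm_normalize d (E : 'M[C]_d) : adj E = E ->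
  adj ((\tr E)^-1 *: E) = (\tr E)^-1 *: E.
Proof.
move=> hE; have e : (\tr E)^* = \tr E by rewrite -tr_adj hE.
rewrite adjZ hE; congr (_ *: _); rewrite -[in RHS]e.
exact: fmorphV.
Qed.

Lemma gibbs_herm d beta (H : 'M[C]_d) : adj (gibbs beta H) = gibbs beta H.
Proof.
rewrite /gibbs; apply: herm_normalize.
exact: adj_real_mxfun.
Qed.

Lemma gibbs_comm d beta (H O : 'M[C]_d) : is_hermitian H -> H *m O = O *m H ->
  gibbs beta H *m O = O *m gibbs beta H.
Proof.
move=> hH HO; rewrite /gibbs; apply: comm_scale.
by apply: mxfun_comm => //; exact/herm_normal.
Qed.

Lemma shift_herm d (O : 'M[C]_d) (a b : R) : is_hermitian O ->
  is_hermitian (((a%:C)%C)%:M - ((b%:C)%C) *: O).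
Proof.
move=> hO; rewrite /is_hermitian adjB adj_scalar adjZ !conj_real hO.
by [].
Qed.

Lemma shift_comm d (O G : 'M[C]_d) (a b : C) : O *m G = G *m O ->
  (a%:M - b *: O) *m G = G *m (a%:M - b *: O).
Proof.
move=> OG; rewrite mulmxBl mulmxBr scalar_mxC -scalemxAl -scalemxAr OG.
by [].
Qed.

Lemma kraus_comm d (O G : 'M[C]_d) kappa m gamma j : is_hermitian O ->
  O *m G = G *m O -> kraus O kappa m gamma j *m G = G *m kraus O kappa m gamma j.
Proof.
move=> hO OG; rewrite /kraus; apply: comm_scale; apply: comm_sum => l _.
apply: mxfun_comm; first exact/herm_normal/shift_herm.
exact: shift_comm.
Qed.

Lemma gxi_rev m l : (l <= gN m)%N -> gxi R m (gN m - l) = - gxi R m l.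
Proof.
move=> lN; rewrite /gxi natrB //.
set N := (gN m)%:R; set L := l%:R; set h := gh R m.
rewrite -(mulNr (L - N/2) h); congr (_ * _); lra.
Qed.

Lemma ghatN (g x : R) : ghat g (- x) = ghat g x.
Proof. by rewrite /ghat sqrrN. Qed.

Lemma kraus_herm d (O : 'M[C]_d) kappa m gamma j : is_hermitian O ->
  adj (kraus O kappa m gamma j) = kraus O kappa m gamma j.
Proof.
move=> hO; rewrite /kraus adjZ conj_real adj_sum; congr (_ *: _).
rewrite [RHS]big_nat_rev; apply: eq_big_nat => l /andP[l1 lN].
have -> : (1 + gN m - l.+1 = gN m - l)%N by lia.
rewrite adjZ conj_real adj_mxfun gxi_rev; last exact: ltnW.
rewrite ghatN.
have -> : (fun x => (expi (2 * pi * gxi R m l * x))^*) =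
          (fun x => expi (2 * pi * - gxi R m l * x)).
  by apply: funext => x; rewrite expi_conj mulrN mulNr.
by [].
Qed.

Lemma mean_real d (rho O : 'M[C]_d) kappa m gamma : adj rho = rho ->
  (gqpe_mean rho O kappa m gamma)^* = gqpe_mean rho O kappa m gamma.
Proof.
move=> hr; rewrite /gqpe_mean conj_sum'; apply: eq_bigr => j _.
rewrite conjM' conj_real -tr_adj !adjM adjK hr !mulmxA.
by [].
Qed.

End Aux.

Theorem theorem6p2 (R : realType) (n : nat) (H O : 'M[R[i]]_(2 ^ n)) (beta : R)
  (kappa : R) (m : nat) (gamma : R) :
  is_hermitian H -> 0 < beta -> is_hermitian O -> H *m O = O *m H ->
  0 < kappa -> opnorm_le O kappa -> (0 < m)%N -> 0 < gamma ->
  forall s : R, 0 <= s <= 1 ->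
    s_detailed_balance (gibbs beta H) s (gqpe O kappa m gamma) /\
    s_detailed_balance (gibbs beta H) s (gqpe_hat (gibbs beta H) O kappa m gamma).
Proof.
move=> hH _ hO HO _ _ _ _ s _.
have hrho : adj (gibbs beta H) = gibbs beta H by apply: gibbs_herm.
have rO : gibbs beta H *m O = O *m gibbs beta H by apply: gibbs_comm.
have nrho : gibbs beta H \is normalmx by apply: herm_normal.
have KP : forall (j : 'I_(gN m)) t,
    kraus O kappa m gamma j *m mxpowR (gibbs beta H) t =
    mxpowR (gibbs beta H) t *m kraus O kappa m gamma j.
  move=> j t; symmetry; apply: mxfun_comm; first exact: nrho.
  by apply/esym; apply: kraus_comm; [exact: hO | exact: esym rO].
have KH : forall j : 'I_(gN m), adj (kraus O kappa m gamma j) = kraus O kappa m gamma j.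
  by move=> j; apply: kraus_herm.
split.
  have -> : gqpe O kappa m gamma = (fun X => \sum_(j < gN m)
      1 *: (kraus O kappa m gamma j *m X *m adj (kraus O kappa m gamma j))).
    by apply: funext => X; rewrite /gqpe; apply: eq_bigr => j _; rewrite scale1r.
  apply: db_generic; [by move=> j; exact: conjC1 | exact: KH | exact: KP].
apply: db_generic; [move=> j | exact: KH | exact: KP].
by rewrite conjB' conj_real mean_real.
Qed.
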